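(* Let $\sigma_1=\sigma_x,\sigma_2=\sigma_y,\sigma_3=\sigma_z$ be the Pauli matrices. For $\underline{\lambda}=(\lambda_1,\lambda_2,\lambda_3)\in\mathbb{R}^3$ let $U_{\underline{\lambda}}=\exp\{-i\sum_{j=1}^3\lambda_j\,\sigma_j\otimes\sigma_j\}$ act on $\mathbb{C}^2\otimes\mathbb{C}^2$. Let $|\psi_0\rangle$ be any normalized two-qubit pure state and $|\psi_{\underline{\lambda}}\rangle=U_{\underline{\lambda}}|\psi_0\rangle$. Then the Uhlmann curvature (incompatibility) matrix $D$ of the model $\underline{\lambda}\mapsto|\psi_{\underline{\lambda}}\rangle$ vanishes identically: $D_{jk}=0$ for all $j,k\in\{1,2,3\}$, every $\underline{\lambda}$ and every probe $|\psi_0\rangle$.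
   Context: For a pure-state model $\underline{\lambda}\mapsto|\psi_{\underline{\lambda}}\rangle$, with $\partial_j=\partial/\partial\lambda_j$, the Uhlmann curvature matrix is $D_{jk}=4\,\mathrm{Im}\big[\langle\partial_j\psi|\partial_k\psi\rangle-\langle\partial_j\psi|\psi\rangle\langle\psi|\partial_k\psi\rangle\big]$ (equivalently $D_{jk}=-\tfrac{i}{2}\mathrm{Tr}[\rho[L_j,L_k]]$ with $L_j$ the symmetric logarithmic derivatives of $\rho=|\psi_{\underline{\lambda}}\rangle\langle\psi_{\underline{\lambda}}|$). *)

(* Defs.v *)
From HB Require Import structures.
From mathcomp Require Import all_boot all_order all_algebra.
From mathcomp Require Import all_classical all_reals.
From mathcomp Require Import topology normedtype sequences derive.
From mathcomp Require Import complex mxtens.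
Set Implicit Arguments. Unset Strict Implicit. Unset Printing Implicit Defensive.
Import Order.TTheory GRing.Theory Num.Theory.
Import numFieldNormedType.Exports.
Local Open Scope ring_scope.

Section Defs.
Variable R : realType.
Local Notation C := (complex R).

Definition cRe (z : C) : R := complex.Re z.
Definition cIm (z : C) : R := complex.Im z.
Definition iC : C := @Complex R 0 1.
Definition cconj (z : C) : C := @Complex R (cRe z) (- cIm z).

Definition sigma_x : 'M[C]_2 := \matrix_(a < 2, b < 2) (if a == b then 0 else 1).
Definition sigma_y : 'M[C]_2 :=
  \matrix_(a < 2, b < 2) (if a == b then 0 else if val a == 0%N then - iC else iC).
Definition sigma_z : 'M[C]_2 :=
  \matrix_(a < 2, b < 2) (if a == b then (if val a == 0%N then 1 else -1) else 0).
Definition pauli (j : 'I_3) : 'M[C]_2 :=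
  match val j with 0%N => sigma_x | 1%N => sigma_y | _ => sigma_z end.

Definition expm n (A : 'M[C]_n) : 'M[C]_n :=
  \matrix_(a, b)
    @Complex R (limn (fun N => \sum_(0 <= k < N) cRe ((A ^+ k) a b / (k`!)%:R)))
            (limn (fun N => \sum_(0 <= k < N) cIm ((A ^+ k) a b / (k`!)%:R))).

Definition Hgen (l : 'rV[R]_3) : 'M[C]_(2 * 2) :=
  \sum_(j < 3) (@Complex R (l 0 j) 0) *: (pauli j *t pauli j).
Definition Ulam (l : 'rV[R]_3) : 'M[C]_(2 * 2) := expm (- iC *: Hgen l).

Definition pderiv (g : 'rV[R]_3 -> R) (l : 'rV[R]_3) (j : 'I_3) : R :=
  derive1 (fun t : R => g (l + t *: delta_mx 0 j)) 0.

Definition cpderiv n (f : 'rV[R]_3 -> 'cV[C]_n) (l : 'rV[R]_3) (j : 'I_3) : 'cV[C]_n :=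
  \col_a @Complex R (pderiv (fun x => cRe (f x a 0)) l j)
                 (pderiv (fun x => cIm (f x a 0)) l j).

Definition braket n (u v : 'cV[C]_n) : C := \sum_a cconj (u a 0) * v a 0.

Definition uhlmannD n (psi : 'rV[R]_3 -> 'cV[C]_n) (l : 'rV[R]_3) (j k : 'I_3) : R :=
  4 * cIm (braket (cpderiv psi l j) (cpderiv psi l k)
          - braket (cpderiv psi l j) (psi l) * braket (psi l) (cpderiv psi l k)).
End Defs.

(* Main.v *)
Require Import Defs.
From HB Require Import structures.
From mathcomp Require Import all_boot all_order all_algebra.
From mathcomp Require Import all_classical all_reals.
From mathcomp Require Import topology normedtype sequences derive trigo realfun.
From mathcomp Require Import complex mxtens.
From mathcomp Require Import ring lra.
Set Implicit Arguments. Unset Strict Implicit. Unset Printing Implicit Defensive.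
Import Order.TTheory GRing.Theory Num.Theory.
Import numFieldNormedType.Exports.
Local Open Scope ring_scope.

Section S.
Variable R : realType.
Local Notation C := (complex R).
Local Notation Re := (@complex.Re R).
Local Notation Im := (@complex.Im R).

Definition Mb (p q r s : C) : 'M[C]_(2*2) := \matrix_(a, b)
  match val a, val b return C with
  | 0%N, 0%N | 3%N, 3%N => p | 0%N, 3%N | 3%N, 0%N => q
  | 1%N, 1%N | 2%N, 2%N => r | 1%N, 2%N | 2%N, 1%N => s
  | _, _ => 0 end.

Lemma MbM p q r s p' q' r' s' :
  Mb p q r s *m Mb p' q' r' s' =
  Mb (p * p' + q * q') (p * q' + q * p') (r * r' + s * s') (r * s' + s * r').
Proof.
apply/matrixP => a b; rewrite !mxE.
rewrite !big_ord_recl big_ord0 !mxE /=.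
case: a => [[|[|[|[|a]]]] Ha] //; case: b => [[|[|[|[|b]]]] Hb] //=; ring.
Qed.


Lemma ReD (x y : C) : Re (x + y) = Re x + Re y. Proof. by case: x; case: y. Qed.
Lemma ImD (x y : C) : Im (x + y) = Im x + Im y. Proof. by case: x; case: y. Qed.
Lemma ReN (x : C) : Re (- x) = - Re x. Proof. by case: x. Qed.
Lemma ImN (x : C) : Im (- x) = - Im x. Proof. by case: x. Qed.
Lemma ReB (x y : C) : Re (x - y) = Re x - Re y. Proof. by case: x; case: y. Qed.
Lemma ImB (x y : C) : Im (x - y) = Im x - Im y. Proof. by case: x; case: y. Qed.
Lemma ReM (x y : C) : Re (x * y) = Re x * Re y - Im x * Im y. Proof. by case: x; case: y. Qed.
Lemma ImM (x y : C) : Im (x * y) = Re x * Im y + Im x * Re y. Proof. by case: x => a b; case: y => c d /=; ring. Qed.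
Lemma Re0 : Re (0 : C) = 0. Proof. by []. Qed.
Lemma Im0 : Im (0 : C) = 0. Proof. by []. Qed.
Lemma Re1 : Re (1 : C) = 1. Proof. by []. Qed.
Lemma Im1 : Im (1 : C) = 0. Proof. by []. Qed.
Lemma ReiC : Re (iC R) = 0. Proof. by []. Qed.
Lemma ImiC : Im (iC R) = 1. Proof. by []. Qed.
Lemma ReC (a b : R) : Re (Complex a b) = a. Proof. by []. Qed.
Lemma ImC (a b : R) : Im (Complex a b) = b. Proof. by []. Qed.
Lemma cRe_Re z : cRe z = Re z. Proof. by []. Qed.
Lemma cIm_Im z : cIm z = Im z. Proof. by []. Qed.
Lemma Reconj z : Re (cconj z) = Re z. Proof. by []. Qed.
Lemma Imconj z : Im (cconj z) = - Im z. Proof. by []. Qed.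
Lemma cx_eq (x y : C) : Re x = Re y -> Im x = Im y -> x = y.
Proof. by case: x; case: y => /= a b c d -> ->. Qed.

Definition cxE := (ReD, ImD, ReN, ImN, ReB, ImB, ReM, ImM, Re0, Im0, Re1, Im1,
  ReiC, ImiC, ReC, ImC, cRe_Re, cIm_Im, Reconj, Imconj).

Lemma o1 : (lift ord0 ord0 : 'I_3) = 1. Proof. by apply: val_inj. Qed.
Lemma o2 : (lift ord0 (lift ord0 ord0) : 'I_3) = 2. Proof. by apply: val_inj. Qed.
Lemma o0 : (ord0 : 'I_3) = 0. Proof. by apply: val_inj. Qed.

Lemma Hgen_Mb (l : 'rV[R]_3) : Hgen l =
  Mb (Complex (l 0 2) 0) (Complex (l 0 0 - l 0 1) 0)
     (Complex (- l 0 2) 0) (Complex (l 0 0 + l 0 1) 0).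
Proof.
apply/matrixP => a b; rewrite /Hgen summxE !big_ord_recl big_ord0 !mxE /=.
rewrite o0 o1 o2.
case: a => [[|[|[|[|a]]]] Ha] //; case: b => [[|[|[|[|b]]]] Hb] //=.
all: apply: cx_eq; rewrite !cxE /=; ring.
Qed.

Lemma scale_Mb c p q r s : c *: Mb p q r s = Mb (c * p) (c * q) (c * r) (c * s).
Proof.
apply/matrixP => a b; rewrite !mxE.
by case: a => [[|[|[|[|a]]]] Ha] //; case: b => [[|[|[|[|b]]]] Hb] //=; rewrite mulr0.
Qed.

Lemma Mb1 : Mb 1 0 1 0 = 1 :> 'M[C]_(2*2).
Proof.
have -> : (1 : 'M[C]_(2*2)) = 1%:M by [].
apply/matrixP => a b; rewrite !mxE.
by case: a => [[|[|[|[|a]]]] Ha] //; case: b => [[|[|[|[|b]]]] Hb] //=.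
Qed.

Lemma Mb_exp p q r s k : Mb p q r s ^+ k =
  Mb (((p + q) ^+ k + (p - q) ^+ k) / 2) (((p + q) ^+ k - (p - q) ^+ k) / 2)
     (((r + s) ^+ k + (r - s) ^+ k) / 2) (((r + s) ^+ k - (r - s) ^+ k) / 2).
Proof.
elim: k => [|k IH].
  rewrite !expr0 -Mb1; congr Mb.
  - by field.
  - by rewrite subrr mul0r.
  - by field.
  - by rewrite subrr mul0r.
rewrite exprS IH -mulmxE MbM; congr Mb; rewrite !exprS; ring.
Qed.

Lemma ReNat n : Re (n%:R : C) = n%:R.
Proof. by elim: n => // n IH; rewrite !mulrS ReD IH. Qed.
Lemma ImNat n : Im (n%:R : C) = 0.
Proof. by elim: n => // n IH; rewrite !mulrS ImD IH addr0. Qed.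

Lemma powiC_even (x : R) n :
  (- iC R * Complex x 0) ^+ n.*2 = Complex ((-1) ^+ n * x ^+ n.*2) 0.
Proof.
elim: n => [|n IH]; first by rewrite !expr0 mul1r.
rewrite doubleS !exprS IH.
apply: cx_eq; rewrite !cxE /=; ring.
Qed.


Lemma fact_neq0 k : (k`!)%:R != 0 :> R.
Proof. by rewrite pnatr_eq0 -lt0n fact_gt0. Qed.
Lemma fact_neq0C k : (k`!)%:R != 0 :> C.
Proof. by rewrite pnatr_eq0 -lt0n fact_gt0. Qed.

Lemma L1e (x : R) n (k := n.*2) :
  (- iC R * Complex x 0) ^+ k / (k`!)%:R = Complex (cos_coeff x k) (- sin_coeff x k).
Proof.
have hfR := fact_neq0 k.
apply: (@mulIf _ (k`!)%:R); first exact: fact_neq0C.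
rewrite mulfVK; last exact: fact_neq0C.
rewrite /cos_coeff /sin_coeff /= /k odd_double /= half_double powiC_even.
apply: cx_eq; rewrite !cxE /= ReNat ImNat /= -!exprnP; field => //.
Qed.

Lemma L1o (x : R) n (k := n.*2.+1) :
  (- iC R * Complex x 0) ^+ k / (k`!)%:R = Complex (cos_coeff x k) (- sin_coeff x k).
Proof.
have hfR := fact_neq0 k.
apply: (@mulIf _ (k`!)%:R); first exact: fact_neq0C.
rewrite mulfVK; last exact: fact_neq0C.
rewrite /cos_coeff /sin_coeff /= /k /= odd_double /= half_double exprS powiC_even.
apply: cx_eq; rewrite !cxE /= ReNat ImNat /= -!exprnP !exprS; field => //.
Qed.

Lemma L1 (x : R) k :
  (- iC R * Complex x 0) ^+ k / (k`!)%:R = Complex (cos_coeff x k) (- sin_coeff x k).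
Proof.
rewrite -[k]odd_double_half; case: (odd k).
  by rewrite add1n; apply: L1o.
by rewrite add0n; apply: L1e.
Qed.

Lemma cos_cvg (z : R) : (series (cos_coeff z) @ \oo --> cos z)%classic.
Proof. rewrite cos.unlock; exact: is_cvg_series_cos_coeff. Qed.
Lemma sin_cvg (z : R) : (series (sin_coeff z) @ \oo --> sin z)%classic.
Proof. rewrite sin.unlock; exact: is_cvg_series_sin_coeff. Qed.

Definition E (x : R) : C := Complex (cos x) (- sin x).

Lemma lim4 (u v u' v' x y : R) :
  limn (fun N => \sum_(0 <= k < N) (u * cos_coeff x k + v * sin_coeff x k
     + (u' * cos_coeff y k + v' * sin_coeff y k)))
  = u * cos x + v * sin x + (u' * cos y + v' * sin y).
Proof.
apply: cvg_lim; first exact: norm_hausdorff.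
have -> : (fun N => \sum_(0 <= k < N) (u * cos_coeff x k + v * sin_coeff x k
     + (u' * cos_coeff y k + v' * sin_coeff y k))) =
   (fun N => u * series (cos_coeff x) N + v * series (sin_coeff x) N
     + (u' * series (cos_coeff y) N + v' * series (sin_coeff y) N)).
  by apply: funext => N; rewrite !big_split /= -!mulr_sumr.
by apply: cvgD; apply: cvgD; apply: cvgMl_tmp;
  [apply: cos_cvg|apply: sin_cvg|apply: cos_cvg|apply: sin_cvg].
Qed.

Lemma expm_entry (A : 'M[C]_(2*2)) a b (c1 c2 : C) (x y : R) :
 (forall k, (A ^+ k) a b = c1 * (- iC R * Complex x 0) ^+ k
                         + c2 * (- iC R * Complex y 0) ^+ k) ->
 expm A a b = c1 * E x + c2 * E y.
Proof.
move=> H; rewrite /expm mxE.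
have eR k : cRe ((A ^+ k) a b / (k`!)%:R) = Re c1 * cos_coeff x k + Im c1 * sin_coeff x k
    + (Re c2 * cos_coeff y k + Im c2 * sin_coeff y k).
  by rewrite H mulrDl -!mulrA !L1 !cxE /=; ring.
have eI k : cIm ((A ^+ k) a b / (k`!)%:R) = Im c1 * cos_coeff x k + (- Re c1) * sin_coeff x k
    + (Im c2 * cos_coeff y k + (- Re c2) * sin_coeff y k).
  by rewrite H mulrDl -!mulrA !L1 !cxE /=; ring.
apply: cx_eq; rewrite !cxE /=.
- under eq_fun => N do under eq_bigr => k _ do rewrite eR.
  by rewrite lim4; ring.
- under eq_fun => N do under eq_bigr => k _ do rewrite eI.
  by rewrite lim4; ring.
Qed.

Definition a1 (l : 'rV[R]_3) := l 0 2 + (l 0 0 - l 0 1).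
Definition a2 (l : 'rV[R]_3) := l 0 2 - (l 0 0 - l 0 1).
Definition b1 (l : 'rV[R]_3) := - l 0 2 + (l 0 0 + l 0 1).
Definition b2 (l : 'rV[R]_3) := - l 0 2 - (l 0 0 + l 0 1).
Definition ph (x : R) : C := - iC R * Complex x 0.

Lemma A_pow l k : (- iC R *: Hgen l) ^+ k =
  Mb ((ph (a1 l) ^+ k + ph (a2 l) ^+ k) / 2) ((ph (a1 l) ^+ k - ph (a2 l) ^+ k) / 2)
     ((ph (b1 l) ^+ k + ph (b2 l) ^+ k) / 2) ((ph (b1 l) ^+ k - ph (b2 l) ^+ k) / 2).
Proof.
rewrite Hgen_Mb scale_Mb Mb_exp.
have e1 : - iC R * Complex (l 0 2) 0 + - iC R * Complex (l 0 0 - l 0 1) 0 = ph (a1 l).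
  by apply: cx_eq; rewrite /ph /a1 !cxE /=; ring.
have e2 : - iC R * Complex (l 0 2) 0 - - iC R * Complex (l 0 0 - l 0 1) 0 = ph (a2 l).
  by apply: cx_eq; rewrite /ph /a2 !cxE /=; ring.
have e3 : - iC R * Complex (- l 0 2) 0 + - iC R * Complex (l 0 0 + l 0 1) 0 = ph (b1 l).
  by apply: cx_eq; rewrite /ph /b1 !cxE /=; ring.
have e4 : - iC R * Complex (- l 0 2) 0 - - iC R * Complex (l 0 0 + l 0 1) 0 = ph (b2 l).
  by apply: cx_eq; rewrite /ph /b2 !cxE /=; ring.
by rewrite e1 e2 e3 e4.
Qed.

Lemma Ulam_Mb l : Ulam l =
  Mb (2^-1 * E (a1 l) + 2^-1 * E (a2 l)) (2^-1 * E (a1 l) + (- 2^-1) * E (a2 l))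
     (2^-1 * E (b1 l) + 2^-1 * E (b2 l)) (2^-1 * E (b1 l) + (- 2^-1) * E (b2 l)).
Proof.
apply/matrixP => a b; rewrite /Ulam [RHS]mxE.
case: a => [[|[|[|[|a]]]] Ha] //; case: b => [[|[|[|[|b]]]] Hb] //=.
all: first [ apply: expm_entry => k
           | rewrite (@expm_entry _ _ _ 0 0 0 0) ?mul0r ?addr0 // => k ].
all: rewrite A_pow mxE /= /ph; ring.
Qed.


Lemma lin_der (t0 d : R) : is_derive (0:R) 1 (fun t : R => t0 + t * d) d.
Proof.
apply: is_derive_eq.
by rewrite add0r mul1r scale0r add0r [d%:A]mulr1.
Qed.

Lemma cos_der (t0 d : R) : is_derive (0:R) 1 (fun t : R => cos (t0 + t * d)) (- sin t0 * d).
Proof.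
have h := @is_derive1_comp R cos (fun t => t0 + t*d) 0 _ _ (is_derive_cos _) (lin_der t0 d).
by rewrite /= mul0r addr0 in h.
Qed.
Lemma sin_der (t0 d : R) : is_derive (0:R) 1 (fun t : R => sin (t0 + t * d)) (cos t0 * d).
Proof.
have h := @is_derive1_comp R sin (fun t => t0 + t*d) 0 _ _ (is_derive_sin _) (lin_der t0 d).
by rewrite /= mul0r addr0 in h.
Qed.

Lemma dRe (t0 d : R) (w : C) :
  derive1 (fun t => Re (E (t0 + t * d) * w)) 0 = d * Im (E t0 * w).
Proof.
have -> : (fun t => Re (E (t0 + t * d) * w)) =
   (fun t => cos (t0 + t * d) * Re w + sin (t0 + t * d) * Im w).
  by apply: funext => t; rewrite /E !cxE; ring.
have hc := cos_der t0 d; have hs := sin_der t0 d.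
rewrite derive1E; apply: derive_val.
apply: is_derive_eq.
rewrite !scaler0 !add0r /E !cxE /=.
rewrite -![_ *: _]/(_ * _).
ring.
Qed.

Lemma dRe2 (t0 d s0 e : R) (w v : C) :
  derive1 (fun t => Re (E (t0 + t * d) * w + E (s0 + t * e) * v)) 0
  = d * Im (E t0 * w) + e * Im (E s0 * v).
Proof.
have -> : (fun t => Re (E (t0 + t * d) * w + E (s0 + t * e) * v)) =
   (fun t => (cos (t0 + t * d) * Re w + sin (t0 + t * d) * Im w) +
             (cos (s0 + t * e) * Re v + sin (s0 + t * e) * Im v)).
  by apply: funext => t; rewrite /E !cxE; ring.
have hc := cos_der t0 d; have hs := sin_der t0 d.
have hc' := cos_der s0 e; have hs' := sin_der s0 e.
rewrite derive1E; apply: derive_val.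
apply: is_derive_eq.
rewrite !scaler0 !add0r /E !cxE /=.
rewrite -![_ *: _]/(_ * _).
ring.
Qed.

Lemma dIm2 (t0 d s0 e : R) (w v : C) :
  derive1 (fun t => Im (E (t0 + t * d) * w + E (s0 + t * e) * v)) 0
  = - (d * Re (E t0 * w) + e * Re (E s0 * v)).
Proof.
have -> : (fun t => Im (E (t0 + t * d) * w + E (s0 + t * e) * v)) =
   (fun t => (cos (t0 + t * d) * Im w - sin (t0 + t * d) * Re w) +
             (cos (s0 + t * e) * Im v - sin (s0 + t * e) * Re v)).
  by apply: funext => t; rewrite /E !cxE; ring.
have hc := cos_der t0 d; have hs := sin_der t0 d.
have hc' := cos_der s0 e; have hs' := sin_der s0 e.
rewrite derive1E; apply: derive_val.
apply: is_derive_eq.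
rewrite !scaler0 ?add0r ?subr0 /E !cxE /=.
rewrite -![_ *: _]/(_ * _).
ring.
Qed.

Definition islin (th : 'rV[R]_3 -> R) :=
  forall l t j, th (l + t *: delta_mx 0 j) = th l + t * th (delta_mx 0 j).

Lemma lin_a1 : islin a1. Proof. by move=> l t j; rewrite /a1 !mxE; ring. Qed.
Lemma lin_a2 : islin a2. Proof. by move=> l t j; rewrite /a2 !mxE; ring. Qed.
Lemma lin_b1 : islin b1. Proof. by move=> l t j; rewrite /b1 !mxE; ring. Qed.
Lemma lin_b2 : islin b2. Proof. by move=> l t j; rewrite /b2 !mxE; ring. Qed.

Lemma cpd (f : 'rV[R]_3 -> C) (th1 th2 : 'rV[R]_3 -> R) (u1 u2 : C) :
  islin th1 -> islin th2 ->
  (forall x, f x = E (th1 x) * u1 + E (th2 x) * u2) -> forall l j,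
  pderiv (fun x => cRe (f x)) l j =
     th1 (delta_mx 0 j) * Im (E (th1 l) * u1) + th2 (delta_mx 0 j) * Im (E (th2 l) * u2)
  /\ pderiv (fun x => cIm (f x)) l j =
     - (th1 (delta_mx 0 j) * Re (E (th1 l) * u1) + th2 (delta_mx 0 j) * Re (E (th2 l) * u2)).
Proof.
move=> h1 h2 hf l j; split; rewrite /pderiv.
- under eq_fun => t do rewrite hf h1 h2.
  exact: dRe2.
- under eq_fun => t do rewrite hf h1 h2.
  exact: dIm2.
Qed.

Definition i0 : 'I_(2*2) := @Ordinal (2*2) 0 isT.
Definition i1 : 'I_(2*2) := @Ordinal (2*2) 1 isT.
Definition i2 : 'I_(2*2) := @Ordinal (2*2) 2 isT.
Definition i3 : 'I_(2*2) := @Ordinal (2*2) 3 isT.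

Lemma sum4 (F : 'I_(2*2) -> C) : \sum_(a < 2*2) F a = F i0 + F i1 + F i2 + F i3.
Proof.
rewrite !big_ord_recl big_ord0 addr0 !addrA.
by congr (_ + _ + _ + _); congr F; apply: val_inj.
Qed.

Lemma cpdE n (f : 'rV[R]_3 -> 'cV[C]_n) l j a :
  cpderiv f l j a 0 = Complex (pderiv (fun x => cRe (f x a 0)) l j)
                              (pderiv (fun x => cIm (f x a 0)) l j).
Proof. by rewrite /cpderiv mxE. Qed.

Definition dv (P Q : C) (x y : R) : C :=
  Complex (x * Im P + y * Im Q) (- (x * Re P + y * Re Q)).

Lemma final (psi D1 D2 : 'cV[C]_(2*2)) (P1 P2 P3 P4 : C)
  (x1 x2 x3 x4 y1 y2 y3 y4 : R) :
  psi i0 0 = P1 + P2 -> psi i1 0 = P3 + P4 ->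
  psi i2 0 = P3 + - P4 -> psi i3 0 = P1 + - P2 ->
  D1 i0 0 = dv P1 P2 x1 x2 -> D1 i1 0 = dv P3 P4 x3 x4 ->
  D1 i2 0 = dv P3 (- P4) x3 x4 -> D1 i3 0 = dv P1 (- P2) x1 x2 ->
  D2 i0 0 = dv P1 P2 y1 y2 -> D2 i1 0 = dv P3 P4 y3 y4 ->
  D2 i2 0 = dv P3 (- P4) y3 y4 -> D2 i3 0 = dv P1 (- P2) y1 y2 ->
  4 * cIm (braket D1 D2 - braket D1 psi * braket psi D2) = 0.
Proof.
move=> h0 h1 h2 h3 d0 d1 d2 d3 e0 e1 e2 e3.
rewrite /braket !sum4 h0 h1 h2 h3 d0 d1 d2 d3 e0 e1 e2 e3 /dv.
rewrite !cxE.
ring.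
Qed.

Theorem main (psi0 : 'cV[complex R]_(2 * 2)) :
  braket psi0 psi0 = 1 ->
  forall (l : 'rV[R]_3) (j k : 'I_3),
    uhlmannD (fun l' : 'rV[R]_3 => Ulam l' *m psi0) l j k = 0.
Proof.
move=> _ l j k.
set w1 := 2^-1 * (psi0 i0 0 + psi0 i3 0).
set w2 := 2^-1 * (psi0 i0 0 - psi0 i3 0).
set w3 := 2^-1 * (psi0 i1 0 + psi0 i2 0).
set w4 := 2^-1 * (psi0 i1 0 - psi0 i2 0).
have hp0 x : (Ulam x *m psi0) i0 0 = E (a1 x) * w1 + E (a2 x) * w2.
  by rewrite Ulam_Mb mxE sum4 !mxE /= /w1 /w2; ring.
have hp1 x : (Ulam x *m psi0) i1 0 = E (b1 x) * w3 + E (b2 x) * w4.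
  by rewrite Ulam_Mb mxE sum4 !mxE /= /w3 /w4; ring.
have hp2 x : (Ulam x *m psi0) i2 0 = E (b1 x) * w3 + E (b2 x) * - w4.
  by rewrite Ulam_Mb mxE sum4 !mxE /= /w3 /w4; ring.
have hp3 x : (Ulam x *m psi0) i3 0 = E (a1 x) * w1 + E (a2 x) * - w2.
  by rewrite Ulam_Mb mxE sum4 !mxE /= /w1 /w2; ring.
have c0 := cpd (f := fun x => (Ulam x *m psi0) i0 0) lin_a1 lin_a2 hp0 l.
have c1 := cpd (f := fun x => (Ulam x *m psi0) i1 0) lin_b1 lin_b2 hp1 l.
have c2 := cpd (f := fun x => (Ulam x *m psi0) i2 0) lin_b1 lin_b2 hp2 l.
have c3 := cpd (f := fun x => (Ulam x *m psi0) i3 0) lin_a1 lin_a2 hp3 l.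
rewrite /uhlmannD.
apply: (@final _ _ _ (E (a1 l) * w1) (E (a2 l) * w2) (E (b1 l) * w3) (E (b2 l) * w4)).
- by rewrite hp0.
- by rewrite hp1.
- by rewrite hp2 mulrN.
- by rewrite hp3 mulrN.
- by rewrite cpdE (proj1 (c0 j)) (proj2 (c0 j)).
- by rewrite cpdE (proj1 (c1 j)) (proj2 (c1 j)).
- by rewrite cpdE (proj1 (c2 j)) (proj2 (c2 j)) mulrN.
- by rewrite cpdE (proj1 (c3 j)) (proj2 (c3 j)) mulrN.
- by rewrite cpdE (proj1 (c0 k)) (proj2 (c0 k)).
- by rewrite cpdE (proj1 (c1 k)) (proj2 (c1 k)).
- by rewrite cpdE (proj1 (c2 k)) (proj2 (c2 k)) mulrN.
- by rewrite cpdE (proj1 (c3 k)) (proj2 (c3 k)) mulrN.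
Qed.
End S.

Unset Implicit Arguments.

Theorem mainTheorem1 (R : realType) (psi0 : 'cV[complex R]_(2 * 2)) :
  braket psi0 psi0 = 1 ->
  forall (l : 'rV[R]_3) (j k : 'I_3),
    uhlmannD (fun l' : 'rV[R]_3 => Ulam l' *m psi0) l j k = 0.
Proof. exact: main. Qed.
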